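(* Let $(G,\sigma)$, $(G',\sigma')$, $(H,\pi)$, $(H',\pi')$ be signed graphs such that $(G,\sigma)$ admits a homomorphism to $(G',\sigma')$ and $(H,\pi)$ admits a homomorphism to $(H',\pi')$. Then $(G,\sigma)\,\square\,(H,\pi)$ admits a homomorphism to $(G',\sigma')\,\square\,(H',\pi')$.
   Context: A signed graph $(G,\sigma)$ is a simple loopless undirected graph $G$ with a signature $\sigma:E(G)\to\{+1,-1\}$. Switching a vertex $v$ negates the sign of every edge incident to $v$; two signatures of $G$ are equivalent if one is obtained from the other by switching a set of vertices. A homomorphism of $(G,\sigma)$ to $(H,\pi)$ is a graph homomorphism $\varphi:G\to H$ for which there is a signature $\sigma'$ equivalent to $\sigma$ with $\pi(\varphi(u)\varphi(v))=\sigma'(uv)$ for every edge $uv$ of $G$. The Cartesian product $(G,\sigma)\,\square\,(H,\pi)$ is the signed graph with vertex set $V(G)\times V(H)$ in which $(u_1,v_1)(u_2,v_2)$ is an edge of sign $s$ if and only if either $u_1=u_2$ and $v_1v_2$ is an edge of $H$ with $\pi(v_1v_2)=s$, or $v_1=v_2$ and $u_1u_2$ is an edge of $G$ with $\sigma(u_1u_2)=s$. *)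

(* Defs.v *)
From mathcomp Require Import all_boot.
Set Implicit Arguments. Unset Strict Implicit. Unset Printing Implicit Defensive.

(* The signature is encoded as a
   symmetric boolean function on pairs of vertices: [sg u v = true] means the
   edge uv has sign -1, [false] means +1.  Values on non-edges are irrelevant. *)
Record sgraph := SGraph {
  svert : finType;
  sadj : rel svert;
  sadj_sym : symmetric sadj;
  sadj_irr : irreflexive sadj;
  ssign : svert -> svert -> bool;
  ssign_sym : forall u v, ssign u v = ssign v u }.

Definition switched (G : sgraph) (X : {set svert G}) (u v : svert G) : bool :=
  ssign u v (+) (u \in X) (+) (v \in X).

Definition sg_hom (G H : sgraph) (phi : svert G -> svert H) : Prop :=
  exists X : {set svert G}, forall u v, sadj u v ->
    sadj (phi u) (phi v) /\ ssign (phi u) (phi v) = switched X u v.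

Definition sg_hom_exists (G H : sgraph) : Prop :=
  exists phi : svert G -> svert H, sg_hom phi.

Section Prod.
Variables G H : sgraph.
Definition prod_adj : rel (svert G * svert H) := fun x y =>
  ((x.1 == y.1) && sadj x.2 y.2) || ((x.2 == y.2) && sadj x.1 y.1).
Definition prod_sign (x y : svert G * svert H) : bool :=
  if x.1 == y.1 then ssign x.2 y.2 else ssign x.1 y.1.

Lemma prod_adj_sym : symmetric prod_adj.
Proof. by move=> x y; rewrite /prod_adj (eq_sym x.1) (eq_sym x.2) sadj_sym (sadj_sym x.1). Qed.
Lemma prod_adj_irr : irreflexive prod_adj.
Proof. by move=> x; rewrite /prod_adj !eqxx !sadj_irr. Qed.
Lemma prod_sign_sym x y : prod_sign x y = prod_sign y x.
Proof. by rewrite /prod_sign eq_sym; case: eqP => _; rewrite ssign_sym. Qed.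

Definition sg_prod : sgraph :=
  @SGraph (svert G * svert H)%type prod_adj prod_adj_sym prod_adj_irr
          prod_sign prod_sign_sym.
End Prod.

(* Main.v *)
Require Import Defs.
From mathcomp Require Import all_boot.

Theorem theorem4p2 (G G' H H' : sgraph) :
  sg_hom_exists G G' -> sg_hom_exists H H' ->
  sg_hom_exists (sg_prod G H) (sg_prod G' H').
Proof.
move=> [f [XG hf]] [g [XH hg]].
exists (fun x : svert (sg_prod G H) => ((f x.1, g x.2) : svert (sg_prod G' H'))).
exists [set x : svert (sg_prod G H) | (x.1 \in XG) (+) (x.2 \in XH)].
move=> [x1 x2] [y1 y2]; rewrite /= /prod_adj /switched /= /prod_sign /= !inE /=.
case/orP=> /andP [/eqP e a].
- subst y1; have [a' s'] := hg _ _ a.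
  rewrite eqxx a' /= s' /switched eqxx.
  by case: (x1 \in XG); case: (x2 \in XH); case: (y2 \in XH); case: ssign.
- subst y2; have [a' s'] := hf _ _ a.
  have ne : (x1 == y1) = false by apply/negbTE/eqP=> E; subst; rewrite sadj_irr in a.
  have ne' : (f x1 == f y1) = false by apply/negbTE/eqP=> E; rewrite E sadj_irr in a'.
  rewrite ne ne' a' eqxx orbT; split=> //; rewrite s' /switched.
  by case: (x1 \in XG); case: (y1 \in XG); case: (x2 \in XH); case: ssign.
Qed.
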